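(* Let $\mathcal{M}$ be a relative category. Then $N_\xi\mathcal{M}$ is Reedy fibrant if and only if, for all $n\ge1$, $m\ge0$ and $0\le k\le n$, every relative functor $\mathcal{S}_{k,n,m}\to\mathcal{M}$ extends to a relative functor $\xi(\hat{\underline n}\times\check{\underline m})\to\mathcal{M}$, where $\mathcal{S}_{k,n,m}\subseteq\xi(\hat{\underline n}\times\check{\underline m})$ is the full relative subposet $c\mathrm{Sd}^2(\Lambda^k[n]\times\Delta[m]\cup_{\Lambda^k[n]\times\partial\Delta[m]}\Delta[n]\times\partial\Delta[m])$ described below.
   Context: A relative category is a category with a subcategory of weak equivalences containing all objects; relative functors preserve weak equivalences; $\mathrm{RelCat}$ is their category. For a poset $P$ with a relative structure, $\xi P$ is the relative poset whose objects are strictly increasing sequences $A_0\subsetneq\dots\subsetneq A_r$ ($r\ge0$) of non-empty finite totally ordered subsets of $P$, with $B_\bullet\le A_\bullet$ iff each $B_j$ occurs among the $A_i$, a weak equivalence iff $\min B_0\le\min A_0$ is a weak equivalence of $P$. Here $\underline p=(0<\dots<p)$, $\check{\underline p}$ has only identities as weak equivalences, $\hat{\underline q}$ has all morphisms as weak equivalences, and products carry componentwise weak equivalences; so in $\hat{\underline n}\times\check{\underline m}$ the relation $(a,u)\le(a',u')$ is a weak equivalence iff $u=u'$. The underlying poset of $\xi(\hat{\underline n}\times\check{\underline m})$ is $c\mathrm{Sd}^2(\Delta[n]\times\Delta[m])$ ($c$ = fundamental category, $\mathrm{Sd}$ = barycentric subdivision). A totally ordered subset $S$ of $[n]\times[m]$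 lies in $\Lambda^k[n]\times\Delta[m]\cup\Delta[n]\times\partial\Delta[m]$ iff its set of first coordinates is neither $[n]$ nor $[n]\setminus\{k\}$ or its set of second coordinates is not all of $[m]$; $\mathcal{S}_{k,n,m}$ is the full subposet of chains $A_0\subsetneq\dots\subsetneq A_r$ whose largest member $A_r$ has this property, with the induced relative structure. $N_\xi\mathcal{M}$ is the bisimplicial set $(p,q)\mapsto\mathrm{RelCat}(\xi(\check{\underline p}\times\hat{\underline q}),\mathcal{M})$; viewed as the simplicial object $p\mapsto(N_\xi\mathcal{M})_{p\bullet}$ in simplicial sets, it is Reedy fibrant if all matching maps are Kan fibrations. *)

(* Defs.v *)
From mathcomp Require Import all_boot.
Set Implicit Arguments. Unset Strict Implicit. Unset Printing Implicit Defensive.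

Record Cat := MkCat {
  Ob : Type; Ar : Type;
  dom : Ar -> Ob; cod : Ar -> Ob;
  idA : Ob -> Ar;
  comp : Ar -> Ar -> Ar;             (* comp g f = g o f, defined when cod f = dom g *)
  dom_id : forall a, dom (idA a) = a;
  cod_id : forall a, cod (idA a) = a;
  dom_comp : forall f g, cod f = dom g -> dom (comp g f) = dom f;
  cod_comp : forall f g, cod f = dom g -> cod (comp g f) = cod g;
  comp_id_l : forall f, comp (idA (cod f)) f = f;
  comp_id_r : forall f, comp f (idA (dom f)) = f;
  comp_assoc : forall f g h, cod f = dom g -> cod g = dom h ->
     comp h (comp g f) = comp (comp h g) f }.

Record RelCat := MkRelCat {
  rcat :> Cat;
  W : Ar rcat -> Prop;
  W_id : forall a, W (idA a);
  W_comp : forall f g, cod f = dom g -> W f -> W g -> W (comp g f) }.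

(* functor data on a carrier T; only its values on the domain D matter *)
Record pfun (M : Cat) (T : Type) := PFun { fo : T -> Ob M; fa : T -> T -> Ar M }.

Definition precomp (M : Cat) (T T' : Type) (g : T' -> T) (F : pfun M T) : pfun M T' :=
  PFun (fun x => fo F (g x)) (fun x y => fa F (g x) (g y)).

Definition is_rfun (M : RelCat) (T : Type) (D : pred T) (le we : rel T)
    (F : pfun M T) : Prop :=
  (forall x y, D x -> D y -> le x y ->
      dom (fa F x y) = fo F x /\ cod (fa F x y) = fo F y) /\
  (forall x, D x -> fa F x x = idA (fo F x)) /\
  (forall x y z, D x -> D y -> D z -> le x y -> le y z ->
      fa F x z = comp (fa F y z) (fa F x y)) /\
  (forall x y, D x -> D y -> le x y -> we x y -> W (fa F x y)).

Definition agree (M : Cat) (T : Type) (D : pred T) (le : rel T) (F G : pfun M T) : Prop :=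
  (forall x, D x -> fo F x = fo G x) /\
  (forall x y, D x -> D y -> le x y -> fa F x y = fa G x y).

Section Xi.
Variables (V : finType) (leV weV : rel V).

Definition chain (A : {set V}) : bool :=
  [forall x in A, forall y in A, leV x y || leV y x].

Definition xi_obj : pred (seq {set V}) := fun s =>
  [&& s != [::], all (fun A => (A != set0) && chain A) s
    & sorted (fun A B : {set V} => A \proper B) s].

Definition xi_le : rel (seq {set V}) := fun B A => all (fun Bj => Bj \in A) B.

Definition is_min (A : {set V}) (x : V) : bool := (x \in A) && [forall y in A, leV x y].

(* B <= A is a weak equivalence iff min B_0 <= min A_0 is one in V *)
Definition xi_we : rel (seq {set V}) := fun B A =>
  [exists x, exists y, [&& is_min (head set0 B) x, is_min (head set0 A) y & weV x y]].
End Xi.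

Definition xmap (V V' : finType) (g : V' -> V) (s : seq {set V'}) : seq {set V} :=
  map (fun A : {set V'} => g @: A) s.

Notation grid p q := ('I_p.+1 * 'I_q.+1)%type.

Definition grid_le (p q : nat) : rel (grid p q) :=
  fun x y => (x.1 <= y.1)%N && (x.2 <= y.2)%N.
(* check p x hat q : weak equivalences are the x <= y with equal first coordinate *)
Definition we_ch (p q : nat) : rel (grid p q) :=
  fun x y => grid_le x y && (x.1 == y.1).
(* hat n x check m : weak equivalences are the x <= y with equal second coordinate *)
Definition we_hc (n m : nat) : rel (grid n m) :=
  fun x y => grid_le x y && (x.2 == y.2).

Definition hmap (p q : nat) (l : 'I_p.+2) : grid p q -> grid p.+1 q :=
  fun x => (lift l x.1, x.2).
Definition vmap (p q : nat) (i : 'I_q.+2) : grid p q -> grid p q.+1 :=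
  fun x => (x.1, lift i x.2).

Section NXi.
Variable M : RelCat.

Definition NXT (p q : nat) := pfun M (seq {set grid p q}).

(* element of (N_xi M)_{p,q}: relative functor xi(check p x hat q) -> M *)
Definition is_NX (p q : nat) (F : NXT p q) : Prop :=
  is_rfun (xi_obj (@grid_le p q)) (@xi_le _)
          (xi_we (@grid_le p q) (@we_ch p q)) F.
Definition eqNX (p q : nat) (F G : NXT p q) : Prop :=
  agree (xi_obj (@grid_le p q)) (@xi_le _) F G.

Definition dh (p q : nat) (l : 'I_p.+2) (F : NXT p.+1 q) : NXT p q :=
  precomp (xmap (@hmap p q l)) F.
Definition dv (p q : nat) (i : 'I_q.+2) (F : NXT p q.+1) : NXT p q :=
  precomp (xmap (@vmap p q i)) F.
End NXi.

Record ssdata := SSD {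
  el : nat -> Type;
  okS : forall q, el q -> Prop;
  eqvS : forall q, el q -> el q -> Prop;
  faceS : forall q, 'I_q.+2 -> el q.+1 -> el q }.

Definition compat (X : ssdata) (n : nat) : pred 'I_n.+2 -> ('I_n.+2 -> el X n) -> Prop :=
  match n as n0 return pred 'I_n0.+2 -> ('I_n0.+2 -> el X n0) -> Prop with
  | 0 => fun _ _ => True
  | n'.+1 => fun D y => forall i j : 'I_n'.+3, (i < j)%N -> D i -> D j ->
       eqvS (faceS (inord i) (y j)) (faceS (inord j.-1) (y i))
  end.

(* f : X -> Y is a Kan fibration: every horn Lambda^k[n+1] -> X (compatible
   family of faces y_i, i <> k) over an (n+1)-simplex z of Y lifts *)
Definition kan_fib (X Y : ssdata) (f : forall q, el X q -> el Y q) : Prop :=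
  forall (n : nat) (k : 'I_n.+2) (y : 'I_n.+2 -> el X n) (z : el Y n.+1),
    (forall i, i != k -> okS (y i)) -> okS z ->
    compat (fun i => i != k) y ->
    (forall i, i != k -> eqvS (faceS i z) (f n (y i))) ->
    exists x : el X n.+1, okS x /\ (forall i, i != k -> eqvS (faceS i x) (y i))
                        /\ eqvS (f n.+1 x) z.

Section Reedy.
Variable M : RelCat.

Definition VX (p : nat) : ssdata :=
  @SSD (fun q => NXT M p q) (fun q => @is_NX M p q) (fun q => @eqNX M p q)
       (fun q i F => dv i F).

Definition HX (q : nat) : ssdata :=
  @SSD (fun p => NXT M p q) (fun p => @is_NX M p q) (fun p => @eqNX M p q)
       (fun p l F => dh l F).

(* matching object M_{p'+1}(N_xi M) at level q: compatible families of the
   p'+2 faces, i.e. maps from the boundary of Delta[p'+1] *)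
Definition MX (p' : nat) : ssdata :=
  @SSD (fun q => 'I_p'.+2 -> NXT M p' q)
       (fun q z => (forall l, is_NX (z l)) /\ @compat (HX q) p' predT z)
       (fun q z z' => forall l, eqNX (z l) (z' l))
       (fun q i z => fun l => dv i (z l)).

Definition mmap (p' : nat) : forall q, el (VX p'.+1) q -> el (MX p') q :=
  fun q x => fun l => dh l x.

Definition ptS : ssdata :=
  @SSD (fun _ => unit) (fun _ _ => True) (fun _ _ _ => True) (fun _ _ _ => tt).

(* Reedy fibrancy of p |-> (N_xi M)_{p,.}: all matching maps are Kan
   fibrations (for p = 0 the matching object is the point) *)
Definition reedy_fibrant : Prop :=
  kan_fib (fun q (_ : el (VX 0) q) => tt : el ptS q) /\
  forall p' : nat, kan_fib (@mmap p').

(* A lies in Lambda^k[n] x Delta[m] u Delta[n] x dDelta[m] *)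
Definition S_set (n m : nat) (k : 'I_n.+1) (A : {set grid n m}) : bool :=
  [&& [set x.1 | x in A] != setT & [set x.1 | x in A] != setT :\ k]
  || ([set x.2 | x in A] != setT).

Definition S_obj (n m : nat) (k : 'I_n.+1) : pred (seq {set grid n m}) :=
  fun s => xi_obj (@grid_le n m) s && S_set k (last set0 s).

Definition extension_property : Prop :=
  forall (n m : nat) (k : 'I_n.+1), (1 <= n)%N ->
  forall F : pfun M (seq {set grid n m}),
    is_rfun (S_obj k) (@xi_le _) (xi_we (@grid_le n m) (@we_hc n m)) F ->
    exists G : pfun M (seq {set grid n m}),
      is_rfun (xi_obj (@grid_le n m)) (@xi_le _) (xi_we (@grid_le n m) (@we_hc n m)) G
      /\ agree (S_obj k) (@xi_le _) G F.
End Reedy.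

(* Main.v *)
Require Import Defs.
From mathcomp Require Import all_boot zify.
Set Implicit Arguments. Unset Strict Implicit. Unset Printing Implicit Defensive.

Lemma rfun_precomp (M : RelCat) (T T' : Type) (D : pred T) (le we : rel T)
  (D' : pred T') (le' we' : rel T') (h : T' -> T) (F : pfun M T) :
  is_rfun D le we F -> (forall x, D' x -> D (h x)) ->
  (forall x y, D' x -> D' y -> le' x y -> le (h x) (h y)) ->
  (forall x y, D' x -> D' y -> le' x y -> we' x y -> we (h x) (h y)) ->
  is_rfun D' le' we' (precomp h F).
Proof.
move=> [H1 [H2 [H3 H4]]] HD Hle Hwe; split; [|split; [|split]] => /=.
- by move=> x y Dx Dy l; apply: H1; auto.
- by move=> x Dx; apply: H2; auto.
- by move=> x y z Dx Dy Dz l1 l2; apply: H3; auto.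
- by move=> x y Dx Dy l w; apply: H4; auto.
Qed.

Lemma sorted_last_sub (V : finType) (a : {set V}) (t : seq {set V}) :
  path (fun A B : {set V} => A \proper B) a t ->
  forall A, A \in a :: t -> A \subset last a t.
Proof.
elim: t a => [|b t IH] a /=.
  by move=> _ A; rewrite inE => /eqP ->.
move=> /andP [ab pt] A; rewrite inE => /orP [/eqP ->|At].
  apply: subset_trans (proper_sub ab) _; apply: IH pt _ _; exact: mem_head.
exact: IH pt _ At.
Qed.

Lemma xi_last_sub (V : finType) (le : rel V) (s : seq {set V}) A :
  xi_obj le s -> A \in s -> A \subset last set0 s.
Proof.
case: s => [|a t]; first by rewrite /xi_obj.
rewrite /xi_obj => /and3P [_ _ st]; exact: sorted_last_sub.
Qed.

Lemma xi_le_last (V : finType) (le : rel V) (B A : seq {set V}) :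
  xi_obj le B -> xi_obj le A -> xi_le B A -> last set0 B \subset last set0 A.
Proof.
have lB : xi_obj le B -> last set0 B \in B.
  by case: B => [|b t]; [rewrite /xi_obj | move=> _ /=; rewrite mem_last].
move=> oB oA /allP H.
exact: (xi_last_sub oA (H _ (lB oB))).
Qed.

Lemma chainP (V : finType) (le : rel V) (A : {set V}) :
  reflect (forall x y, x \in A -> y \in A -> le x y || le y x) (chain le A).
Proof.
apply: (iffP forall_inP) => H x.
  by move=> y xA yA; exact: (forall_inP (H x xA) y yA).
by move=> xA; apply/forall_inP => y yA; exact: H.
Qed.

Lemma is_minP (V : finType) (le : rel V) (A : {set V}) x :
  reflect (x \in A /\ forall y, y \in A -> le x y) (is_min le A x).
Proof.
apply: (iffP andP) => [[xA /forall_inP H]|[xA H]]; split => //.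
by apply/forall_inP.
Qed.

Section Emb.
Variables (V T : finType) (leV weV : rel V) (leT weT : rel T) (g : V -> T).
Hypothesis ginj : injective g.
Hypothesis gle : forall x y, leT (g x) (g y) = leV x y.
Hypothesis gwe : forall x y, weT (g x) (g y) = weV x y.

Definition pre (s : seq {set T}) : seq {set V} := map (fun A : {set T} => g @^-1: A) s.

Lemma preimK (A : {set V}) : g @^-1: (g @: A) = A.
Proof.
apply/setP => x; rewrite !inE; apply/imsetP/idP => [[y yA /ginj ->]//|xA].
by exists x.
Qed.

Lemma imsetK' (A : {set T}) : A \subset g @: setT -> g @: (g @^-1: A) = A.
Proof.
move=> /subsetP sA; apply/setP => x; apply/idP/idP.
  by move=> /imsetP [y]; rewrite inE => yA ->.
move=> xA; have /imsetP [y _ ey] := sA _ xA; subst x.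
by apply: imset_f; rewrite inE.
Qed.

Lemma pre_xmap t : pre (xmap g t) = t.
Proof. by rewrite /pre /xmap -map_comp; elim: t => //= a t ->; rewrite preimK. Qed.

Lemma xmap_pre (s : seq {set T}) : all (fun A : {set T} => A \subset g @: setT) s -> xmap g (pre s) = s.
Proof.
by rewrite /pre /xmap -map_comp; elim: s => //= a t IH /andP [sa /IH ->]; rewrite imsetK'.
Qed.

Lemma head_xmap s : head set0 (xmap g s) = g @: head set0 s.
Proof. by case: s => //=; rewrite imset0. Qed.

Lemma last_xmap s : last set0 (xmap g s) = g @: last set0 s.
Proof. by case: s => [|a t] /=; [rewrite imset0 | rewrite (last_map (fun A : {set V} => g @: A))]. Qed.

Lemma chain_img (A : {set V}) : chain leT (g @: A) = chain leV A.
Proof.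
apply/chainP/chainP => H x y.
  move=> xA yA; rewrite -!gle; apply: H; exact: imset_f.
by move=> /imsetP [x' x'A ->] /imsetP [y' y'A ->]; rewrite !gle; apply: H.
Qed.

Lemma xi_obj_xmap t : xi_obj leV t -> xi_obj leT (xmap g t).
Proof.
move=> /and3P [ne al so]; apply/and3P; split.
- by rewrite /xmap; case: (t) ne.
- apply/allP => _ /mapP [A At ->]; have /andP [nA cA] := allP al A At.
  by rewrite imset_eq0 nA chain_img.
- move: so; rewrite /xmap; apply: homo_sorted => A B AB.
  apply: imset_proper => //; move=> x y _ _; exact: ginj.
Qed.

Lemma xi_le_xmap B A : xi_le B A -> xi_le (xmap g B) (xmap g A).
Proof.
move=> /allP H; apply/allP => _ /mapP [b bB ->]; apply: map_f; exact: H.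
Qed.

Lemma is_min_img (A : {set V}) x : is_min leT (g @: A) (g x) = is_min leV A x.
Proof.
apply/is_minP/is_minP => [[xA H]|[xA H]]; split.
- by rewrite -(mem_imset _ _ ginj).
- by move=> y yA; rewrite -gle; apply: H; exact: imset_f.
- exact: imset_f.
- by move=> _ /imsetP [y yA ->]; rewrite gle; apply: H.
Qed.

Lemma xi_we_xmap B A : xi_we leV weV B A -> xi_we leT weT (xmap g B) (xmap g A).
Proof.
move=> /existsP [x /existsP [y /and3P [mx my w]]].
apply/existsP; exists (g x); apply/existsP; exists (g y).
by rewrite !head_xmap !is_min_img mx my gwe w.
Qed.

Definition inim (s : seq {set T}) := all (fun A : {set T} => A \subset g @: setT) s.

Lemma inim_last s : xi_obj leT s -> last set0 s \subset g @: setT -> inim s.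
Proof.
move=> o sl; apply/allP => A As; apply: subset_trans sl; exact: xi_last_sub o As.
Qed.

Lemma xi_obj_pre s : inim s -> xi_obj leT s -> xi_obj leV (pre s).
Proof.
move=> im o; have e := xmap_pre im; move: o; rewrite -e.
move=> /and3P [ne al so]; rewrite pre_xmap; apply/and3P; split.
- by case: (pre s) ne.
- apply/allP => A At; have := allP al (g @: A) (map_f _ At).
  by rewrite imset_eq0 chain_img.
- have mono : forall A B : {set V}, (g @: A \proper g @: B) = (A \proper B).
    move=> A B; apply/idP/idP; last by apply: imset_proper => x y _ _; exact: ginj.
    move=> /properP [sAB [x xB nxA]].
    have sAB' : A \subset B.
      apply/subsetP => z zA; have := subsetP sAB (g z); rewrite !(mem_imset _ _ ginj).
      by move=> /(_ zA).
    move: xB => /imsetP [x' x'B ex]; subst x.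
    apply/properP; split => //; exists x' => //; apply: contra nxA => xA.
    exact: imset_f.
  move: so; rewrite /xmap sorted_map; apply: sub_sorted => A B /=; by rewrite mono.
Qed.

Lemma xi_le_pre B A : xi_le B A -> xi_le (pre B) (pre A).
Proof.
move=> /allP H; apply/allP => _ /mapP [b bB ->]; apply: map_f; exact: H.
Qed.

Lemma xi_we_pre B A : inim B -> inim A -> xi_we leT weT B A -> xi_we leV weV (pre B) (pre A).
Proof.
move=> iB iA; rewrite -{1}(xmap_pre iB) -{1}(xmap_pre iA).
move=> /existsP [x /existsP [y /and3P [mx my w]]].
move: mx my; rewrite !head_xmap => mx my.
have /imsetP [x' _ ex] : x \in g @: setT.
  by move: mx => /andP [/imsetP [z _ ->] _]; apply: imset_f.
have /imsetP [y' _ ey] : y \in g @: setT.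
  by move: my => /andP [/imsetP [z _ ->] _]; apply: imset_f.
subst x y; apply/existsP; exists x'; apply/existsP; exists y'.
by rewrite -!is_min_img mx my -gwe.
Qed.

End Emb.

Section Glue.
Variables (M : RelCat) (T : finType) (leT weT : rel T) (I : finType) (i0 : I).
Variables (Img : I -> {set T}) (E : I -> pfun M (seq {set T})).

Definition Dom (i : I) : pred (seq {set T}) :=
  fun s => xi_obj leT s && (last set0 s \subset Img i).
Definition Sg : pred (seq {set T}) :=
  fun s => xi_obj leT s && [exists i, last set0 s \subset Img i].

Hypothesis HE : forall i, is_rfun (Dom i) (@xi_le T) (xi_we leT weT) (E i).
Hypothesis Hc1 : forall i j s, Dom i s -> Dom j s -> fo (E i) s = fo (E j) s.
Hypothesis Hc2 : forall i j B A, Dom i B -> Dom i A -> Dom j B -> Dom j A ->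
  xi_le B A -> fa (E i) B A = fa (E j) B A.

Definition pickI (s : seq {set T}) : I := odflt i0 [pick i | last set0 s \subset Img i].
Definition glue : pfun M (seq {set T}) :=
  PFun (fun s => fo (E (pickI s)) s) (fun B A => fa (E (pickI A)) B A).

Lemma Dom_Sg i s : Dom i s -> Sg s.
Proof. by move=> /andP [o l]; apply/andP; split => //; apply/existsP; exists i. Qed.

Lemma pick_dom s : Sg s -> Dom (pickI s) s.
Proof.
move=> /andP [o /existsP [i li]]; rewrite /pickI; case: pickP => [j lj|/(_ i)].
  by apply/andP.
by rewrite li.
Qed.

Lemma dom_down i B A : Dom i A -> xi_obj leT B -> xi_le B A -> Dom i B.
Proof.
move=> /andP [oA lA] oB le; apply/andP; split => //.
exact: subset_trans (xi_le_last oB oA le) lA.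
Qed.

Lemma glue_fo i s : Dom i s -> fo glue s = fo (E i) s.
Proof. move=> D /=; apply: Hc1 => //; apply: pick_dom; exact: Dom_Sg D. Qed.

Lemma glue_fa i B A : Dom i A -> xi_obj leT B -> xi_le B A -> fa glue B A = fa (E i) B A.
Proof.
move=> D oB le /=; have D' := pick_dom (Dom_Sg D).
apply: Hc2 => //; exact: dom_down le.
Qed.

Lemma glue_rfun : is_rfun Sg (@xi_le T) (xi_we leT weT) glue.
Proof.
split; [|split; [|split]].
- move=> x y Sx Sy le; have Dy := pick_dom Sy.
  have Dx := dom_down Dy (andP Sx).1 le.
  rewrite (glue_fo Dx) (glue_fo Dy) /=; have [H _] := HE (pickI y); exact: H.
- move=> x Sx /=; have Dx := pick_dom Sx; have [_ [H _]] := HE (pickI x); exact: H.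
- move=> x y z Sx Sy Sz l1 l2; have Dz := pick_dom Sz.
  have Dy := dom_down Dz (andP Sy).1 l2; have Dx := dom_down Dy (andP Sx).1 l1.
  rewrite [fa glue x y](glue_fa Dy (andP Sx).1 l1) /=.
  have [_ [_ [H _]]] := HE (pickI z); apply: H => //.
- move=> x y Sx Sy l w /=; have Dy := pick_dom Sy.
  have Dx := dom_down Dy (andP Sx).1 l.
  have [_ [_ [_ H]]] := HE (pickI y); exact: H.
Qed.
End Glue.

Lemma face_rfun (M : RelCat) (V T : finType) (leV weV : rel V) (leT weT : rel T)
  (g : V -> T) (D : pfun M (seq {set V})) :
  injective g -> (forall x y, leT (g x) (g y) = leV x y) ->
  (forall x y, weT (g x) (g y) = weV x y) ->
  is_rfun (xi_obj leV) (@xi_le V) (xi_we leV weV) D ->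
  is_rfun (fun s => xi_obj leT s && (last set0 s \subset g @: setT)) (@xi_le T)
          (xi_we leT weT) (precomp (pre g) D).
Proof.
move=> gi gl gw HD; apply: (rfun_precomp HD).
- by move=> s /andP [o l]; exact: (xi_obj_pre gi gl (inim_last o l) o).
- by move=> x y _ _; apply: xi_le_pre.
- move=> x y /andP [ox lx] /andP [oy ly] _.
  exact: (xi_we_pre gi gl gw (inim_last ox lx) (inim_last oy ly)).
Qed.

Lemma xmap_comp (U V T : finType) (g : V -> T) (h : U -> V) (s : seq {set U}) :
  xmap g (xmap h s) = xmap (g \o h) s.
Proof. by rewrite /xmap -map_comp; apply: eq_map => A /=; rewrite imset_comp. Qed.

Lemma xmap_ext (U T : finType) (g h : U -> T) (s : seq {set U}) :
  g =1 h -> xmap g s = xmap h s.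
Proof. by move=> e; apply: eq_map => A; apply: eq_imset. Qed.

Section Double.
Variables (W V1 V2 T : finType) (leW : rel W) (leV1 : rel V1) (leT : rel T).
Variables (g1 : V1 -> T) (g2 : V2 -> T) (h1 : W -> V1) (h2 : W -> V2).
Hypotheses (g1i : injective g1) (g2i : injective g2) (h1i : injective h1)
  (g1l : forall x y, leT (g1 x) (g1 y) = leV1 x y)
  (h1l : forall x y, leV1 (h1 x) (h1 y) = leW x y)
  (gh : forall x, g1 (h1 x) = g2 (h2 x)).

Lemma double_pre s : inim g1 s -> inim h1 (pre g1 s) ->
  pre g1 s = xmap h1 (pre h1 (pre g1 s)) /\ pre g2 s = xmap h2 (pre h1 (pre g1 s)).
Proof.
move=> i1 i2; have e1 := xmap_pre i2; split => //.
have e0 := xmap_pre i1.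
rewrite -{1}e0 -{1}e1 xmap_comp (@xmap_ext _ _ (g1 \o h1) (g2 \o h2) _ gh) -xmap_comp pre_xmap //.
Qed.

Variable M : Cat.
Variables (X1 : pfun M (seq {set V1})) (X2 : pfun M (seq {set V2})).
Hypothesis Hag : agree (xi_obj leW) (@xi_le W) (precomp (xmap h1) X1) (precomp (xmap h2) X2).

Lemma double_fo s : xi_obj leT s -> inim g1 s -> inim h1 (pre g1 s) ->
  fo X1 (pre g1 s) = fo X2 (pre g2 s).
Proof.
move=> o i1 i2; have [e1 e2] := double_pre i1 i2.
have ot := xi_obj_pre h1i h1l i2 (xi_obj_pre g1i g1l i1 o).
move: e1 e2 ot; set t := pre h1 _ => e1 e2 ot; rewrite e2 e1.
exact: (proj1 Hag).
Qed.

Lemma double_fa B A : xi_obj leT B -> xi_obj leT A -> inim g1 B -> inim g1 A ->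
  inim h1 (pre g1 B) -> inim h1 (pre g1 A) -> xi_le B A ->
  fa X1 (pre g1 B) (pre g1 A) = fa X2 (pre g2 B) (pre g2 A).
Proof.
move=> oB oA iB iA jB jA le.
have [eB1 eB2] := double_pre iB jB; have [eA1 eA2] := double_pre iA jA.
have otB := xi_obj_pre h1i h1l jB (xi_obj_pre g1i g1l iB oB).
have otA := xi_obj_pre h1i h1l jA (xi_obj_pre g1i g1l iA oA).
have lt : xi_le (pre h1 (pre g1 B)) (pre h1 (pre g1 A)) by do 2 apply: xi_le_pre.
move: eB1 eB2 eA1 eA2 otB otA lt; set tB := pre h1 (pre g1 B); set tA := pre h1 (pre g1 A).
move=> eB1 eB2 eA1 eA2 otB otA lt; rewrite eB2 eA2 eB1 eA1.
exact: (proj2 Hag).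
Qed.
End Double.

Definition swp (a b : nat) (x : grid a b) : grid b a := (x.2, x.1).

Section GridMaps.
Variables p q : nat.

Lemma lift_le n (l : 'I_n.+1) (a b : 'I_n) : (lift l a <= lift l b) = (a <= b).
Proof. by rewrite /= leq_bump2. Qed.

Lemma vmap_inj i : injective (@vmap p q i).
Proof. move=> [a b] [c d] [e1 /(congr1 (unbump i))]; rewrite !bumpK => e2.
by rewrite e1; congr pair; exact: val_inj. Qed.
Lemma hmap_inj l : injective (@hmap p q l).
Proof. move=> [a b] [c d] [/(congr1 (unbump l)) e1 e2]; rewrite !bumpK in e1.
by rewrite e2; congr pair; exact: val_inj. Qed.
Lemma vmap_le i x y : grid_le (@vmap p q i x) (vmap i y) = grid_le x y.
Proof. by rewrite /grid_le /= lift_le. Qed.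
Lemma hmap_le l x y : grid_le (@hmap p q l x) (hmap l y) = grid_le x y.
Proof. by rewrite /grid_le /= lift_le. Qed.
Lemma vmap_we i x y : we_ch (@vmap p q i x) (vmap i y) = we_ch x y.
Proof. by rewrite /we_ch vmap_le. Qed.
Lemma hmap_we l x y : we_ch (@hmap p q l x) (hmap l y) = we_ch x y.
Proof. by rewrite /we_ch hmap_le /= (inj_eq lift_inj). Qed.
Lemma swp_inj : injective (@swp p q).
Proof. by move=> [a b] [c d] [-> ->]. Qed.
Lemma swp_le x y : grid_le (@swp p q x) (swp y) = grid_le x y.
Proof. by rewrite /grid_le /= andbC. Qed.
Lemma swp_we x y : we_ch (@swp p q x) (swp y) = we_hc x y.
Proof. by rewrite /we_ch /we_hc swp_le. Qed.
Lemma swpK : cancel (@swp p q) (@swp q p).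
Proof. by case. Qed.

Lemma sub_vimg i (A : {set grid p q.+1}) :
  reflect (forall x, x \in A -> x.2 != i) (A \subset @vmap p q i @: setT).
Proof.
apply: (iffP subsetP) => H x xA.
  by have /imsetP [y _ ->] := H x xA; rewrite /= eq_sym neq_lift.
have := H x xA; rewrite eq_sym => /unlift_some [j ej _].
by apply/imsetP; exists (x.1, j) => //; rewrite /vmap /= -ej; case: (x).
Qed.

Lemma sub_himg l (A : {set grid p.+1 q}) :
  reflect (forall x, x \in A -> x.1 != l) (A \subset @hmap p q l @: setT).
Proof.
apply: (iffP subsetP) => H x xA.
  by have /imsetP [y _ ->] := H x xA; rewrite /= eq_sym neq_lift.
have := H x xA; rewrite eq_sym => /unlift_some [j ej _].
by apply/imsetP; exists (j, x.2) => //; rewrite /hmap /= -ej; case: (x).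
Qed.
End GridMaps.

Lemma lift_lift_lt n (i j : 'I_n.+3) (x : 'I_n.+1) : i < j ->
  lift j (lift (inord i) x) = lift i (lift (inord j.-1) x).
Proof.
move=> lij; apply: val_inj => /=.
have hi : (i < n.+2)%N by apply: leq_trans lij (ltn_ord j).
have hj : (j.-1 < n.+2)%N by case: (nat_of_ord j) (ltn_ord j) lij => [|jj] //=.
rewrite !inordK //; rewrite /bump.
case: (nat_of_ord j) lij hj => [|jj] // lij _ /=.
case: (nat_of_ord i) lij => [|ii] lij; case: (nat_of_ord x) => [|xx] /=;
  repeat (case: leqP => ? /=); lia.
Qed.

Lemma bump_lt (j i : nat) : i < j -> bump j i = i.
Proof. by move=> h; rewrite /bump leqNgt h. Qed.

Lemma inim_vv p n (i j : 'I_n.+3) (s : seq {set grid p n.+2}) : i < j ->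
  inim (@vmap p n.+1 j) s -> inim (@vmap p n.+1 i) s ->
  inim (@vmap p n (inord i)) (pre (@vmap p n.+1 j) s).
Proof.
move=> lij _ /allP H; apply/allP => _ /mapP [A As ->].
apply/sub_vimg => x; rewrite inE => xA; apply: contraTneq (H A As) => ex.
apply/negP => /sub_vimg /(_ _ xA) /=; rewrite ex.
have hi : (i < n.+2)%N by apply: leq_trans lij (ltn_ord j).
suff -> : lift j (inord i : 'I_n.+2) = i by rewrite eqxx.
by apply: val_inj => /=; rewrite inordK // bump_lt.
Qed.

Lemma inim_hh p n (i j : 'I_p.+3) (s : seq {set grid p.+2 n}) : i < j ->
  inim (@hmap p.+1 n j) s -> inim (@hmap p.+1 n i) s ->
  inim (@hmap p n (inord i)) (pre (@hmap p.+1 n j) s).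
Proof.
move=> lij _ /allP H; apply/allP => _ /mapP [A As ->].
apply/sub_himg => x; rewrite inE => xA; apply: contraTneq (H A As) => ex.
apply/negP => /sub_himg /(_ _ xA) /=; rewrite ex.
have hi : (i < p.+2)%N by apply: leq_trans lij (ltn_ord j).
suff -> : lift j (inord i : 'I_p.+2) = i by rewrite eqxx.
by apply: val_inj => /=; rewrite inordK // bump_lt.
Qed.

Lemma inim_hv p n (l : 'I_p.+2) (i : 'I_n.+2) (s : seq {set grid p.+1 n.+1}) :
  inim (@hmap p n.+1 l) s -> inim (@vmap p.+1 n i) s ->
  inim (@vmap p n i) (pre (@hmap p n.+1 l) s).
Proof.
move=> _ /allP H; apply/allP => _ /mapP [A As ->].
apply/sub_vimg => x; rewrite inE => xA.
by have := sub_vimg _ _ (H A As); move=> /(_ _ xA).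
Qed.

Lemma inim_vh p n (l : 'I_p.+2) (i : 'I_n.+2) (s : seq {set grid p.+1 n.+1}) :
  inim (@vmap p.+1 n i) s -> inim (@hmap p n.+1 l) s ->
  inim (@hmap p n l) (pre (@vmap p.+1 n i) s).
Proof.
move=> _ /allP H; apply/allP => _ /mapP [A As ->].
apply/sub_himg => x; rewrite inE => xA.
by have := sub_himg _ _ (H A As); move=> /(_ _ xA).
Qed.

Section Compat.
Variable M : RelCat.

Lemma vv_gh p n (i j : 'I_n.+3) : i < j -> forall x,
  @vmap p n.+1 j (@vmap p n (inord i) x) = vmap i (vmap (inord j.-1) x).
Proof. by move=> lij [a b]; rewrite /vmap /= lift_lift_lt. Qed.

Lemma hh_gh p n (i j : 'I_p.+3) : i < j -> forall x,
  @hmap p.+1 n j (@hmap p n (inord i) x) = hmap i (hmap (inord j.-1) x).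
Proof. by move=> lij [a b]; rewrite /hmap /= lift_lift_lt. Qed.

Lemma hv_gh p n (l : 'I_p.+2) (i : 'I_n.+2) x :
  @hmap p n.+1 l (@vmap p n i x) = vmap i (hmap l x).
Proof. by case: x. Qed.

Lemma vv_fo p n (y : 'I_n.+3 -> NXT M p n.+1) (i j : 'I_n.+3) : i < j ->
  eqNX (dv (inord i) (y j)) (dv (inord j.-1) (y i)) ->
  forall s, xi_obj (@grid_le p n.+2) s -> inim (vmap j) s -> inim (vmap i) s ->
  fo (y j) (pre (vmap j) s) = fo (y i) (pre (vmap i) s).
Proof.
move=> lij ag s o ij ii.
apply: (double_fo (@vmap_inj _ _ _) (@vmap_inj _ _ _) (@vmap_inj _ _ _) (@vmap_le _ _ _) (@vmap_le _ _ _)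
   (vv_gh lij) ag o ij (inim_vv lij ij ii)).
Qed.

Lemma vv_fa p n (y : 'I_n.+3 -> NXT M p n.+1) (i j : 'I_n.+3) : i < j ->
  eqNX (dv (inord i) (y j)) (dv (inord j.-1) (y i)) ->
  forall B A, xi_obj (@grid_le p n.+2) B -> xi_obj (@grid_le p n.+2) A ->
  inim (vmap j) B -> inim (vmap i) B -> inim (vmap j) A -> inim (vmap i) A -> xi_le B A ->
  fa (y j) (pre (vmap j) B) (pre (vmap j) A) = fa (y i) (pre (vmap i) B) (pre (vmap i) A).
Proof.
move=> lij ag B A oB oA jB iB jA iA le.
apply: (double_fa (@vmap_inj _ _ _) (@vmap_inj _ _ _) (@vmap_inj _ _ _) (@vmap_le _ _ _) (@vmap_le _ _ _)
   (vv_gh lij) ag oB oA jB jA (inim_vv lij jB iB) (inim_vv lij jA iA) le).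
Qed.

Lemma hh_fo p n (z : 'I_p.+3 -> NXT M p.+1 n) (i j : 'I_p.+3) : i < j ->
  eqNX (dh (inord i) (z j)) (dh (inord j.-1) (z i)) ->
  forall s, xi_obj (@grid_le p.+2 n) s -> inim (hmap j) s -> inim (hmap i) s ->
  fo (z j) (pre (hmap j) s) = fo (z i) (pre (hmap i) s).
Proof.
move=> lij ag s o ij ii.
apply: (double_fo (@hmap_inj _ _ _) (@hmap_inj _ _ _) (@hmap_inj _ _ _) (@hmap_le _ _ _) (@hmap_le _ _ _)
   (hh_gh lij) ag o ij (inim_hh lij ij ii)).
Qed.

Lemma hh_fa p n (z : 'I_p.+3 -> NXT M p.+1 n) (i j : 'I_p.+3) : i < j ->
  eqNX (dh (inord i) (z j)) (dh (inord j.-1) (z i)) ->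
  forall B A, xi_obj (@grid_le p.+2 n) B -> xi_obj (@grid_le p.+2 n) A ->
  inim (hmap j) B -> inim (hmap i) B -> inim (hmap j) A -> inim (hmap i) A -> xi_le B A ->
  fa (z j) (pre (hmap j) B) (pre (hmap j) A) = fa (z i) (pre (hmap i) B) (pre (hmap i) A).
Proof.
move=> lij ag B A oB oA jB iB jA iA le.
apply: (double_fa (@hmap_inj _ _ _) (@hmap_inj _ _ _) (@hmap_inj _ _ _) (@hmap_le _ _ _) (@hmap_le _ _ _)
   (hh_gh lij) ag oB oA jB jA (inim_hh lij jB iB) (inim_hh lij jA iA) le).
Qed.

Lemma hv_fo p n (l : 'I_p.+2) (i : 'I_n.+2) (Z : NXT M p n.+1) (Y : NXT M p.+1 n) :
  eqNX (dv i Z) (dh l Y) ->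
  forall s, xi_obj (@grid_le p.+1 n.+1) s -> inim (hmap l) s -> inim (vmap i) s ->
  fo Z (pre (hmap l) s) = fo Y (pre (vmap i) s).
Proof.
move=> ag s o il ii.
apply: (double_fo (@hmap_inj _ _ _) (@vmap_inj _ _ _) (@vmap_inj _ _ _) (@hmap_le _ _ _) (@vmap_le _ _ _)
   (@hv_gh p n l i) ag o il (inim_hv il ii)).
Qed.

Lemma hv_fa p n (l : 'I_p.+2) (i : 'I_n.+2) (Z : NXT M p n.+1) (Y : NXT M p.+1 n) :
  eqNX (dv i Z) (dh l Y) ->
  forall B A, xi_obj (@grid_le p.+1 n.+1) B -> xi_obj (@grid_le p.+1 n.+1) A ->
  inim (hmap l) B -> inim (vmap i) B -> inim (hmap l) A -> inim (vmap i) A -> xi_le B A ->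
  fa Z (pre (hmap l) B) (pre (hmap l) A) = fa Y (pre (vmap i) B) (pre (vmap i) A).
Proof.
move=> ag B A oB oA lB iB lA iA le.
apply: (double_fa (@hmap_inj _ _ _) (@vmap_inj _ _ _) (@vmap_inj _ _ _) (@hmap_le _ _ _) (@vmap_le _ _ _)
   (@hv_gh p n l i) ag oB oA lB lA (inim_hv lB iB) (inim_hv lA iA) le).
Qed.
End Compat.

Lemma last_ne0 (V : finType) (le : rel V) (s : seq {set V}) :
  xi_obj le s -> last set0 s != set0.
Proof.
case: s => [|a t]; first by rewrite /xi_obj.
rewrite /xi_obj => /and3P [_ /allP al _].
by have /andP [] := al _ (mem_last a t).
Qed.

Section SN.
Variables (p n : nat) (k : 'I_n.+2).

Definition Sp (A : {set grid p n.+1}) : bool :=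
  ([set x.2 | x in A] != setT) && ([set x.2 | x in A] != setT :\ k)
  || ([set x.1 | x in A] != setT).
Definition SN : pred (seq {set grid p n.+1}) :=
  fun s => xi_obj (@grid_le p n.+1) s && Sp (last set0 s).

Lemma notin_proj2 (A : {set grid p n.+1}) i :
  (i \notin [set x.2 | x in A]) = (A \subset @vmap p n i @: setT).
Proof.
apply/idP/sub_vimg => [H x xA|H]; first by apply: contraNneq H => <-; apply: imset_f.
by apply/imsetP => [[x xA ex]]; have := H x xA; rewrite ex eqxx.
Qed.

Lemma proj2_cond (A : {set grid p n.+1}) :
  ([set x.2 | x in A] != setT) && ([set x.2 | x in A] != setT :\ k) =
  [exists i, (i != k) && (A \subset @vmap p n i @: setT)].
Proof.
set P := [set x.2 | x in A].
apply/idP/idP => [/andP [h1 h2]|/existsP [i /andP [ik]]].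
  case E: [exists i, _] => //; move/negbT: E => /existsPn H.
  have sub : forall i, i != k -> i \in P.
    by move=> i ik; have := H i; rewrite ik /= -notin_proj2 negbK.
  case kP : (k \in P).
    suff e : P = setT by rewrite e eqxx in h1.
    apply/setP => i; rewrite inE.
    by case: (eqVneq i k) => [->|/sub].
  suff e : P = setT :\ k by rewrite e eqxx in h2.
  apply/setP => i; rewrite !inE.
  by case: (eqVneq i k) => [->|/sub ->]; rewrite ?kP.
rewrite -notin_proj2 -/P => iP; apply/andP; split; apply: contraNneq iP => ->.
  by rewrite inE.
by rewrite !inE ik.
Qed.

Definition ImgV (i : 'I_n.+2) : {set grid p n.+1} :=
  if i == k then set0 else @vmap p n i @: setT.

Lemma sub_ImgV (A : {set grid p n.+1}) i : A != set0 ->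
  (A \subset ImgV i) = (i != k) && (A \subset @vmap p n i @: setT).
Proof.
rewrite /ImgV; case: (eqVneq i k) => //= _ A0.
by apply/negP => /subset_leq_card; rewrite cards0 leqn0 cards_eq0 (negbTE A0).
Qed.
End SN.

Lemma proj1_0 n (A : {set grid 0 n}) : A != set0 -> ([set x.1 | x in A] != setT) = false.
Proof.
case/set0Pn => x xA; apply/negbF/eqP/setP => i; rewrite inE.
by apply/imsetP; exists x => //; rewrite !ord1.
Qed.

Lemma SN0_Sg n (k : 'I_n.+2) (s : seq {set grid 0 n.+1}) : SN k s = Sg (@grid_le 0 n.+1) (ImgV 0 k) s.
Proof.
rewrite /SN /Sg; case o: (xi_obj _ s) => //=; have ne := last_ne0 o.
rewrite /Sp proj1_0 // orbF proj2_cond; apply/existsP/existsP => [[i H]|[i H]];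
  exists i; by rewrite ?sub_ImgV // in H *.
Qed.

Lemma notin_proj1 p n (A : {set grid p.+1 n}) l :
  (l \notin [set x.1 | x in A]) = (A \subset @hmap p n l @: setT).
Proof.
apply/idP/sub_himg => [H x xA|H]; first by apply: contraNneq H => <-; apply: imset_f.
by apply/imsetP => [[x xA ex]]; have := H x xA; rewrite ex eqxx.
Qed.

Lemma proj1_cond p n (A : {set grid p.+1 n}) :
  ([set x.1 | x in A] != setT) = [exists l, A \subset @hmap p n l @: setT].
Proof.
apply/idP/existsP => [|[l]].
  move=> H; case E: [exists l, l \notin [set x.1 | x in A]].
    by move/existsP: E => [l lP]; exists l; rewrite -notin_proj1.
  move/negbT: E => /existsPn H'.
  suff e : [set x.1 | x in A] = setT by rewrite e eqxx in H.
  by apply/setP => l; rewrite inE; have := H' l; rewrite negbK.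
by rewrite -notin_proj1; apply: contraNneq => ->.
Qed.

Definition ImgS p n (k : 'I_n.+2) (c : 'I_n.+2 + 'I_p.+2) : {set grid p.+1 n.+1} :=
  match c with inl i => ImgV p.+1 k i | inr l => @hmap p n.+1 l @: setT end.

Lemma SNS_Sg p n (k : 'I_n.+2) (s : seq {set grid p.+1 n.+1}) : SN k s = Sg (@grid_le p.+1 n.+1) (@ImgS p n k) s.
Proof.
rewrite /SN /Sg; case o: (xi_obj _ s) => //=; have ne := last_ne0 o.
rewrite /Sp proj2_cond proj1_cond; apply/orP/existsP.
  case=> /existsP [c H]; [exists (inl c) | exists (inr c)] => //=.
  by rewrite sub_ImgV.
case=> [[i|l]] /= H; [left | right]; apply/existsP; exists i || exists l => //.
by rewrite sub_ImgV in H.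
Qed.

Lemma xmap_id (T : finType) (s : seq {set T}) : xmap id s = s.
Proof. by rewrite /xmap; elim: s => //= a t ->; rewrite imset_id. Qed.

Lemma xmap_swpK a b (s : seq {set grid a b}) : xmap (@swp b a) (xmap (@swp a b) s) = s.
Proof. by rewrite xmap_comp (@xmap_ext _ _ _ id _ (@swpK a b)) xmap_id. Qed.

Lemma swp_we' a b x y : we_hc (@swp a b x) (swp y) = we_ch x y.
Proof. by rewrite /we_ch /we_hc swp_le. Qed.

Lemma xi_obj_swp a b (s : seq {set grid a b}) :
  xi_obj (@grid_le b a) (xmap (@swp a b) s) = xi_obj (@grid_le a b) s.
Proof.
apply/idP/idP; last exact: xi_obj_xmap (@swp_inj a b) (@swp_le a b) s.
move=> o; rewrite -(xmap_swpK s); exact: xi_obj_xmap (@swp_inj b a) (@swp_le b a) _ o.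
Qed.

Lemma S_swap n p (k : 'I_n.+2) (s : seq {set grid n.+1 p}) :
  S_obj k s = SN k (xmap (@swp n.+1 p) s).
Proof.
rewrite /S_obj /SN xi_obj_swp; congr andb.
by rewrite last_xmap /Sp /S_set -!imset_comp.
Qed.

Lemma face_agree (M : Cat) (V T : finType) (leV : rel V) (leT : rel T) (g : V -> T)
  (X Y : pfun M (seq {set T})) : injective g -> (forall x y, leT (g x) (g y) = leV x y) ->
  agree (xi_obj leV) (@xi_le V) (precomp (xmap g) X) (precomp (xmap g) Y) ->
  (forall s, xi_obj leT s -> inim g s -> fo X s = fo Y s) /\
  (forall B A, xi_obj leT B -> xi_obj leT A -> inim g B -> inim g A -> xi_le B A ->
     fa X B A = fa Y B A).
Proof.
move=> gi gl [H1 H2]; split.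
  move=> s o i; rewrite -(xmap_pre i); apply: H1.
  exact: (@xi_obj_pre V T leV leT g gi gl s i o).
move=> B A oB oA iB iA le; rewrite -(xmap_pre iB) -(xmap_pre iA); apply: H2.
- exact: (@xi_obj_pre V T leV leT g gi gl B iB oB).
- exact: (@xi_obj_pre V T leV leT g gi gl A iA oA).
- exact: xi_le_pre.
Qed.

Lemma rfun_sub (M : RelCat) (T : Type) (D D' : pred T) (le we : rel T) (F : pfun M T) :
  is_rfun D le we F -> (forall x, D' x -> D x) -> is_rfun D' le we F.
Proof.
move=> [H1 [H2 [H3 H4]]] S; split; [|split; [|split]]; auto.
Qed.

Lemma agree_cover (M : Cat) (T : finType) (leT : rel T) (D : pred (seq {set T}))
  (X Y : pfun M (seq {set T})) :
  (forall A, D A -> xi_obj leT A /\ exists (V : finType) (leV : rel V) (g : V -> T),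
     [/\ injective g, (forall x y, leT (g x) (g y) = leV x y),
         last set0 A \subset g @: setT &
         agree (xi_obj leV) (@xi_le V) (precomp (xmap g) X) (precomp (xmap g) Y)]) ->
  agree D (@xi_le T) X Y.
Proof.
move=> H; split.
  move=> s Ds; have [o [V [leV [g [gi gl ls ag]]]]] := H s Ds.
  have [H1 _] := face_agree gi gl ag; exact: H1 s o (inim_last o ls).
move=> B A DB DA le; have [oA [V [leV [g [gi gl ls ag]]]]] := H A DA.
have oB := (H B DB).1.
have [_ H2] := face_agree gi gl ag; apply: (H2 B A oB oA _ (inim_last oA ls) le).
exact: (inim_last oB (subset_trans (xi_le_last oB oA le) ls)).
Qed.

Lemma agree_eq (M : Cat) (U T : Type) (D : pred U) (le : rel U) (h1 h2 : U -> T)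
  (X : pfun M T) : (forall t, h1 t = h2 t) -> agree D le (precomp h1 X) (precomp h2 X).
Proof. by move=> e; split => [x _|x y _ _ _] /=; rewrite !e. Qed.

Lemma vv_xmap p n (i j : 'I_n.+3) (t : seq {set grid p n}) : i < j ->
  xmap (@vmap p n.+1 j) (xmap (vmap (inord i)) t) = xmap (vmap i) (xmap (vmap (inord j.-1)) t).
Proof. by move=> lij; rewrite !xmap_comp; apply: xmap_ext => x /=; apply: vv_gh. Qed.

Lemma hh_xmap p n (i j : 'I_p.+3) (t : seq {set grid p n}) : i < j ->
  xmap (@hmap p.+1 n j) (xmap (hmap (inord i)) t) = xmap (hmap i) (xmap (hmap (inord j.-1)) t).
Proof. by move=> lij; rewrite !xmap_comp; apply: xmap_ext => x /=; apply: hh_gh. Qed.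

Lemma hv_xmap p n (l : 'I_p.+2) (i : 'I_n.+2) (t : seq {set grid p n}) :
  xmap (@hmap p n.+1 l) (xmap (vmap i) t) = xmap (vmap i) (xmap (hmap l) t).
Proof. by rewrite !xmap_comp; apply: xmap_ext => x /=; apply: hv_gh. Qed.

Lemma SN_vface p n (k i : 'I_n.+2) (t : seq {set grid p n}) : i != k ->
  xi_obj (@grid_le p n) t -> SN k (xmap (vmap i) t).
Proof.
move=> ik o; rewrite /SN (xi_obj_xmap (@vmap_inj _ _ _) (@vmap_le _ _ _) o) /= /Sp proj2_cond.
apply/orP; left; apply/existsP; exists i; rewrite ik last_xmap /=.
by apply: imsetS; apply: subsetT.
Qed.

Lemma SN_hface p n (k : 'I_n.+2) (l : 'I_p.+2) (t : seq {set grid p n.+1}) :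
  xi_obj (@grid_le p n.+1) t -> SN k (xmap (hmap l) t).
Proof.
move=> o; rewrite /SN (xi_obj_xmap (@hmap_inj _ _ _) (@hmap_le _ _ _) o) /= /Sp proj1_cond.
apply/orP; right; apply/existsP; exists l; rewrite last_xmap /=.
by apply: imsetS; apply: subsetT.
Qed.

Section R2E.
Variable M : RelCat.

Lemma compat_dv p n (Pd : pred 'I_n.+2) (F' : NXT M p n.+1) :
  @compat (VX M p) n Pd (fun i => dv i F').
Proof.
case: n Pd F' => [|n] Pd F' //= i j lij _ _.
by split => [t _|tB tA _ _ _] /=; rewrite !vv_xmap.
Qed.

Lemma compat_dh p n (F' : NXT M p.+1 n) :
  @compat (HX M n) p predT (fun l => dh l F').
Proof.
case: p F' => [|p] F' //= i j lij _ _.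
by split => [t _|tB tA _ _ _] /=; rewrite !hh_xmap.
Qed.

Lemma finishR n m (k : 'I_n.+2) (F : pfun M (seq {set grid n.+1 m})) (x : NXT M m n.+1) :
  is_NX x -> agree (SN k) (@xi_le _) x (precomp (xmap (@swp m n.+1)) F) ->
  exists G, is_rfun (xi_obj (@grid_le n.+1 m)) (@xi_le _)
                    (xi_we (@grid_le n.+1 m) (@we_hc n.+1 m)) G
            /\ agree (S_obj k) (@xi_le _) G F.
Proof.
move=> Hx [A1 A2]; exists (precomp (xmap (@swp n.+1 m)) x); split.
  apply: (rfun_precomp Hx).
  - by move=> s o; rewrite xi_obj_swp.
  - by move=> B A _ _; apply: xi_le_xmap.
  - by move=> B A _ _ _; apply: (xi_we_xmap (@swp_inj _ _) (@swp_le _ _) (@swp_we _ _)).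
split => [s Ss|B A SB SA le] /=.
  by rewrite A1 /= ?xmap_swpK // -S_swap.
rewrite A2 /= ?xmap_swpK // -?S_swap //; exact: xi_le_xmap.
Qed.

Lemma HF_lem m n (k : 'I_n.+2) (F : pfun M (seq {set grid n.+1 m})) :
  is_rfun (S_obj k) (@xi_le _) (xi_we (@grid_le n.+1 m) (@we_hc n.+1 m)) F ->
  is_rfun (SN k) (@xi_le _) (xi_we (@grid_le m n.+1) (@we_ch m n.+1))
    (precomp (xmap (@swp m n.+1)) F).
Proof.
move=> HF; apply: (rfun_precomp HF).
- by move=> u Su; rewrite S_swap xmap_swpK.
- by move=> x y _ _; apply: xi_le_xmap.
- by move=> x y _ _ _; apply: (xi_we_xmap (@swp_inj _ _) (@swp_le _ _) (@swp_we' _ _)).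
Qed.

Lemma Hy_lem p n (k : 'I_n.+2) (F' : NXT M p n.+1) :
  is_rfun (SN k) (@xi_le _) (xi_we (@grid_le p n.+1) (@we_ch p n.+1)) F' ->
  forall i, i != k -> is_NX (dv i F').
Proof.
move=> HF' i ik; apply: (rfun_precomp HF').
- by move=> t o; apply: SN_vface.
- by move=> x y _ _; apply: xi_le_xmap.
- by move=> x y _ _ _; apply: (xi_we_xmap (@vmap_inj _ _ _) (@vmap_le _ _ _) (@vmap_we _ _ _)).
Qed.

Lemma R2E : reedy_fibrant M -> extension_property M.
Proof.
move=> [K0 KS] n' m k n1 F HF.
case: n' k F HF n1 => [|n] k F HF _ //.
case: m F HF => [|p] F HF.
- pose F' := precomp (xmap (@swp 0 n.+1)) F.
  have HF' := HF_lem HF; have Hy := Hy_lem HF'.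
- have [x [Hx [Hf _]]] := K0 n k (fun i => dv i F') tt Hy I (compat_dv _ _) (fun _ _ => I).
  apply: finishR Hx _; apply: (agree_cover (leT := @grid_le 0 n.+1)) => A SA.
  have oA := (andP SA).1; split => //.
  move: SA; rewrite SN0_Sg => SA; have := pick_dom k SA.
  set i := pickI k _ A; rewrite /Dom /ImgV; case: (eqVneq i k) => [_|ik].
    by move=> /andP [_]; rewrite subset0 (negbTE (last_ne0 oA)).
  move=> /andP [_ ls]; exists (grid 0 n : finType), (@grid_le 0 n), (@vmap 0 n i); split => //.
  + exact: vmap_inj.
  + exact: vmap_le.
  + exact: Hf.
- pose F' := precomp (xmap (@swp p.+1 n.+1)) F.
  have HF' := HF_lem HF; have Hy := Hy_lem HF'.
  have Hz : forall l, is_NX (dh l F').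
    move=> l; apply: (rfun_precomp HF').
    + by move=> t o; apply: SN_hface.
    + by move=> x y _ _; apply: xi_le_xmap.
    + by move=> x y _ _ _; apply: (xi_we_xmap (@hmap_inj _ _ _) (@hmap_le _ _ _) (@hmap_we _ _ _)).
  have Hyz : forall i, i != k -> forall l, eqNX (dv i (dh l F')) (dh l (dv i F')).
    by move=> i _ l; split => [t _|tB tA _ _ _] /=; rewrite !hv_xmap.
  have [x [Hx [Hf Hm]]] := KS p n k (fun i => dv i F') (fun l => dh l F') Hy
     (conj Hz (compat_dh _)) (compat_dv _ _) Hyz.
  apply: finishR Hx _; apply: (agree_cover (leT := @grid_le p.+1 n.+1)) => A SA.
  have oA := (andP SA).1; split => //.
  move: SA; rewrite SNS_Sg => SA; have := pick_dom (inl k) SA.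
  set c := pickI _ _ A; case: c => [i|l]; rewrite /Dom /ImgS /ImgV.
    case: (eqVneq i k) => [_|ik].
      by move=> /andP [_]; rewrite subset0 (negbTE (last_ne0 oA)).
    move=> /andP [_ ls]; exists (grid p.+1 n : finType), (@grid_le p.+1 n), (@vmap p.+1 n i); split => //.
    + exact: vmap_inj.
    + exact: vmap_le.
    + exact: Hf.
  move=> /andP [_ ls]; exists (grid p n.+1 : finType), (@grid_le p n.+1), (@hmap p n.+1 l); split => //.
  + exact: hmap_inj.
  + exact: hmap_le.
  + exact: Hm.
Qed.
End R2E.

Section E2R.
Variable M : RelCat.

Lemma extN m n (k : 'I_n.+2) (F' : NXT M m n.+1) : extension_property M ->
  is_rfun (SN k) (@xi_le _) (xi_we (@grid_le m n.+1) (@we_ch m n.+1)) F' ->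
  exists x : NXT M m n.+1, is_NX x /\ agree (SN k) (@xi_le _) x F'.
Proof.
move=> EP HF'.
have HF : is_rfun (S_obj k) (@xi_le _) (xi_we (@grid_le n.+1 m) (@we_hc n.+1 m))
            (precomp (xmap (@swp n.+1 m)) F').
  apply: (rfun_precomp HF').
  - by move=> s Ss; rewrite -S_swap.
  - by move=> x y _ _; apply: xi_le_xmap.
  - by move=> x y _ _ _; apply: (xi_we_xmap (@swp_inj _ _) (@swp_le _ _) (@swp_we _ _)).
have [G [HG [A1 A2]]] := EP n.+1 m k isT _ HF.
exists (precomp (xmap (@swp m n.+1)) G); split.
  apply: (rfun_precomp HG).
  - by move=> s o; rewrite xi_obj_swp.
  - by move=> B A _ _; apply: xi_le_xmap.
  - by move=> B A _ _ _; apply: (xi_we_xmap (@swp_inj _ _) (@swp_le _ _) (@swp_we' _ _)).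
split => [s Ss|B A SB SA le] /=.
  by rewrite A1 /= ?xmap_swpK // S_swap xmap_swpK.
rewrite A2 /= ?xmap_swpK ?S_swap ?xmap_swpK //; exact: xi_le_xmap.
Qed.

Lemma face_from_glue (V T : finType) (leV : rel V) (leT : rel T) (g : V -> T)
  (D : pred (seq {set T})) (X F' : pfun M (seq {set T})) (Y : pfun M (seq {set V})) :
  agree D (@xi_le T) X F' -> (forall t, xi_obj leV t -> D (xmap g t)) ->
  (forall t, xi_obj leV t -> fo F' (xmap g t) = fo Y t) ->
  (forall tB tA, xi_obj leV tB -> xi_obj leV tA -> xi_le tB tA ->
     fa F' (xmap g tB) (xmap g tA) = fa Y tB tA) ->
  agree (xi_obj leV) (@xi_le V) (precomp (xmap g) X) Y.
Proof.
move=> [A1 A2] HD H1 H2; split => [t o|tB tA oB oA le] /=.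
  by rewrite A1 ?H1 //; apply: HD.
by rewrite A2 ?H2 ?HD //; apply: xi_le_xmap.
Qed.

Lemma rfun_empty (T : Type) (D : pred T) (le we : rel T) (F : pfun M T) :
  (forall x, ~~ D x) -> is_rfun D le we F.
Proof.
move=> H; split; [move=> x y Dx|split; [move=> x Dx|split; [move=> x y z Dx|move=> x y Dx]]];
  by move: (H x); rewrite Dx.
Qed.

Lemma dom_v p n (k i : 'I_n.+2) (s : seq {set grid p n.+1}) :
  Dom (@grid_le p n.+1) (ImgV p k) i s -> i != k /\ inim (@vmap p n i) s.
Proof.
move=> /andP [o]; rewrite sub_ImgV ?(last_ne0 o) // => /andP [ik ls].
by split => //; exact: (inim_last o ls).
Qed.

Lemma dom_h p n (l : 'I_p.+2) (s : seq {set grid p.+1 n}) :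
  Dom (@grid_le p.+1 n) (fun l => @hmap p n l @: setT) l s -> inim (@hmap p n l) s.
Proof. by move=> /andP [o ls]; exact: (inim_last o ls). Qed.

Lemma dom_vface p n (k i : 'I_n.+2) (t : seq {set grid p n}) : i != k ->
  xi_obj (@grid_le p n) t -> Dom (@grid_le p n.+1) (ImgV p k) i (xmap (@vmap p n i) t).
Proof.
move=> ik o; have o' := xi_obj_xmap (@vmap_inj _ _ i) (@vmap_le _ _ i) o.
rewrite /Dom o' /= (sub_ImgV k i (last_ne0 o')) ik last_xmap /=.
by apply: imsetS; apply: subsetT.
Qed.

Lemma dom_hface p n (l : 'I_p.+2) (t : seq {set grid p n}) :
  xi_obj (@grid_le p n) t ->
  Dom (@grid_le p.+1 n) (fun l => @hmap p n l @: setT) l (xmap (@hmap p n l) t).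
Proof.
move=> o; have o' := xi_obj_xmap (@hmap_inj _ _ l) (@hmap_le _ _ l) o.
by rewrite /Dom o' last_xmap /=; apply: imsetS; apply: subsetT.
Qed.

Lemma HE_v p n (k i : 'I_n.+2) (Y : NXT M p n) : (i != k -> is_NX Y) ->
  is_rfun (Dom (@grid_le p n.+1) (ImgV p k) i) (@xi_le _)
          (xi_we (@grid_le p n.+1) (@we_ch p n.+1)) (precomp (pre (@vmap p n i)) Y).
Proof.
move=> HY; case: (eqVneq i k) => [ik|ik].
  apply: rfun_empty => s; apply/negP => /andP [o]; rewrite /ImgV ik eqxx.
  by rewrite subset0 (negbTE (last_ne0 o)).
apply: rfun_sub (face_rfun (@vmap_inj _ _ _) (@vmap_le _ _ _) (@vmap_we _ _ _) (HY ik)) _.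
by move=> s /andP [o]; rewrite /ImgV (negbTE ik) o.
Qed.

Lemma HE_h p n (l : 'I_p.+2) (Z : NXT M p n) : is_NX Z ->
  is_rfun (Dom (@grid_le p.+1 n) (fun l => @hmap p n l @: setT) l) (@xi_le _)
          (xi_we (@grid_le p.+1 n) (@we_ch p.+1 n)) (precomp (pre (@hmap p n l)) Z).
Proof. move=> HZ; exact: (face_rfun (@hmap_inj _ _ _) (@hmap_le _ _ _) (@hmap_we _ _ _) HZ). Qed.

Lemma ord2_neq (i j k : 'I_2) : i != k -> j != k -> i != j -> False.
Proof.
rewrite -!val_eqE /=; have := ltn_ord i; have := ltn_ord j; have := ltn_ord k; lia.
Qed.

Lemma Hc_vv p n (k : 'I_n.+2) (y : 'I_n.+2 -> NXT M p n)
  (Hc : @compat (VX M p) n (fun i => i != k) y) (i j : 'I_n.+2) :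
  (forall s, Dom (@grid_le p n.+1) (ImgV p k) i s -> Dom (@grid_le p n.+1) (ImgV p k) j s ->
     fo (y i) (pre (vmap i) s) = fo (y j) (pre (vmap j) s)) /\
  (forall B A, Dom (@grid_le p n.+1) (ImgV p k) i B -> Dom (@grid_le p n.+1) (ImgV p k) i A ->
     Dom (@grid_le p n.+1) (ImgV p k) j B -> Dom (@grid_le p n.+1) (ImgV p k) j A -> xi_le B A ->
     fa (y i) (pre (vmap i) B) (pre (vmap i) A) = fa (y j) (pre (vmap j) B) (pre (vmap j) A)).
Proof.
case: (eqVneq i j) => [<-|ij]; first by split.
split.
  move=> s Di Dj; have [ik ii] := dom_v Di; have [jk jj] := dom_v Dj.
  have o := (andP Di).1.
  case: n k y Hc i j ij s Di Dj ik ii jk jj o => [|n] k y Hc i j ij s Di Dj ik ii jk jj o.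
    by case: (ord2_neq ik jk ij).
  case: (ltngtP i j) => [lij|lji|eij]; last by rewrite (val_inj eij) eqxx in ij.
    by rewrite (vv_fo lij (Hc i j lij ik jk) o jj ii).
  by rewrite (vv_fo lji (Hc j i lji jk ik) o ii jj).
move=> B A DiB DiA DjB DjA le; have [ik iB] := dom_v DiB; have [jk jB] := dom_v DjB.
have [_ iA] := dom_v DiA; have [_ jA] := dom_v DjA.
have oB := (andP DiB).1; have oA := (andP DiA).1.
case: n k y Hc i j ij B A DiB DiA DjB DjA le ik iB jk jB iA jA oB oA
  => [|n] k y Hc i j ij B A DiB DiA DjB DjA le ik iB jk jB iA jA oB oA.
  by case: (ord2_neq ik jk ij).
case: (ltngtP i j) => [lij|lji|eij]; last by rewrite (val_inj eij) eqxx in ij.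
  by rewrite (vv_fa lij (Hc i j lij ik jk) oB oA jB iB jA iA le).
by rewrite (vv_fa lji (Hc j i lji jk ik) oB oA iB jB iA jA le).
Qed.

Definition DomH p n := Dom (@grid_le p.+1 n) (fun l : 'I_p.+2 => @hmap p n l @: setT).

Lemma hh_2 n (l l' : 'I_2) (s : seq {set grid 1 n}) : l != l' ->
  xi_obj (@grid_le 1 n) s -> inim (@hmap 0 n l) s -> inim (@hmap 0 n l') s -> False.
Proof.
move=> ll o /allP i1 /allP i2.
have ls : last set0 s \in s.
  move: o; case: (s) => [|a t]; [by rewrite /xi_obj | by rewrite /= mem_last].
have /set0Pn [x xl] := last_ne0 o.
move/sub_himg: (i1 _ ls) => /(_ x xl) h1; move/sub_himg: (i2 _ ls) => /(_ x xl) h2.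
rewrite eq_sym in h1; rewrite eq_sym in h2; exact: (ord2_neq h1 h2 ll).
Qed.

Lemma Hc_hh p n (z : 'I_p.+2 -> NXT M p n)
  (Hc : @compat (HX M n) p predT z) (i j : 'I_p.+2) :
  (forall s, DomH i s -> DomH j s ->
     fo (z i) (pre (hmap i) s) = fo (z j) (pre (hmap j) s)) /\
  (forall B A, DomH i B -> DomH i A -> DomH j B -> DomH j A -> xi_le B A ->
     fa (z i) (pre (hmap i) B) (pre (hmap i) A) = fa (z j) (pre (hmap j) B) (pre (hmap j) A)).
Proof.
case: (eqVneq i j) => [<-|ij]; first by split.
split.
  move=> s Di Dj; have ii := dom_h Di; have jj := dom_h Dj.
  have o := (andP Di).1.
  case: p z Hc i j ij s Di Dj ii jj o => [|p] z Hc i j ij s Di Dj ii jj o.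
    by case: (hh_2 ij o ii jj).
  case: (ltngtP i j) => [lij|lji|eij]; last by rewrite (val_inj eij) eqxx in ij.
    by rewrite (hh_fo lij (Hc i j lij isT isT) o jj ii).
  by rewrite (hh_fo lji (Hc j i lji isT isT) o ii jj).
move=> B A DiB DiA DjB DjA le; have iB := dom_h DiB; have jB := dom_h DjB.
have iA := dom_h DiA; have jA := dom_h DjA.
have oB := (andP DiB).1; have oA := (andP DiA).1.
case: p z Hc i j ij B A DiB DiA DjB DjA le iB jB iA jA oB oA
  => [|p] z Hc i j ij B A DiB DiA DjB DjA le iB jB iA jA oB oA.
  by case: (hh_2 ij oA iA jA).
case: (ltngtP i j) => [lij|lji|eij]; last by rewrite (val_inj eij) eqxx in ij.
  by rewrite (hh_fa lij (Hc i j lij isT isT) oB oA jB iB jA iA le).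
by rewrite (hh_fa lji (Hc j i lji isT isT) oB oA iB jB iA jA le).
Qed.

Lemma Hc_hv p n (k : 'I_n.+2) (l : 'I_p.+2) (i : 'I_n.+2) (Z : NXT M p n.+1) (Y : NXT M p.+1 n)
  (Hyz : i != k -> eqNX (dv i Z) (dh l Y)) :
  (forall s, DomH l s -> Dom (@grid_le p.+1 n.+1) (ImgV p.+1 k) i s ->
     fo Z (pre (hmap l) s) = fo Y (pre (vmap i) s)) /\
  (forall B A, DomH l B -> DomH l A -> Dom (@grid_le p.+1 n.+1) (ImgV p.+1 k) i B ->
     Dom (@grid_le p.+1 n.+1) (ImgV p.+1 k) i A -> xi_le B A ->
     fa Z (pre (hmap l) B) (pre (hmap l) A) = fa Y (pre (vmap i) B) (pre (vmap i) A)).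
Proof.
split.
  move=> s Dl Di; have il := dom_h Dl; have [ik ii] := dom_v Di.
  exact: (hv_fo (Hyz ik) (andP Dl).1 il ii).
move=> B A DlB DlA DiB DiA le; have lB := dom_h DlB; have lA := dom_h DlA.
have [ik iB] := dom_v DiB; have [_ iA] := dom_v DiA.
exact: (hv_fa (Hyz ik) (andP DlB).1 (andP DlA).1 lB iB lA iA le).
Qed.
End E2R.

Section Final.
Variable M : RelCat.

Lemma E2R_0 : extension_property M ->
  kan_fib (fun q (_ : el (VX M 0) q) => tt : el ptS q).
Proof.
move=> EP n k y z Hy _ Hc _.
pose E := fun i => precomp (pre (@vmap 0 n i)) (y i).
have HE : forall i, is_rfun (Dom (@grid_le 0 n.+1) (ImgV 0 k) i) (@xi_le _)
                 (xi_we (@grid_le 0 n.+1) (@we_ch 0 n.+1)) (E i).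
  by move=> i; apply: HE_v; apply: Hy.
have Hc1 : forall i j s, Dom (@grid_le 0 n.+1) (ImgV 0 k) i s ->
    Dom (@grid_le 0 n.+1) (ImgV 0 k) j s -> fo (E i) s = fo (E j) s.
  by move=> i j; exact: (Hc_vv Hc i j).1.
have Hc2 : forall i j B A, Dom (@grid_le 0 n.+1) (ImgV 0 k) i B ->
    Dom (@grid_le 0 n.+1) (ImgV 0 k) i A -> Dom (@grid_le 0 n.+1) (ImgV 0 k) j B ->
    Dom (@grid_le 0 n.+1) (ImgV 0 k) j A -> xi_le B A -> fa (E i) B A = fa (E j) B A.
  by move=> i j; exact: (Hc_vv Hc i j).2.
have HF := glue_rfun k HE Hc1 Hc2.
have HF' : is_rfun (SN k) (@xi_le _) (xi_we (@grid_le 0 n.+1) (@we_ch 0 n.+1)) (glue k (ImgV 0 k) E).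
  by apply: (rfun_sub HF) => s; rewrite SN0_Sg.
have [x [Hx Ag]] := extN EP HF'.
exists x; split => //; split => // i ik.
change (agree (xi_obj (@grid_le 0 n)) (@xi_le _) (precomp (xmap (@vmap 0 n i)) x) (y i)).
apply: (@face_from_glue M _ _ (@grid_le 0 n) (@grid_le 0 n.+1) (@vmap 0 n i) (SN k) x
   (glue k (ImgV 0 k) E) (y i) Ag).
- by move=> t o; apply: SN_vface.
- move=> t o; rewrite (glue_fo k Hc1 (dom_vface ik o)) /= pre_xmap //; exact: vmap_inj.
- move=> tB tA oB oA le.
  rewrite (glue_fa k Hc2 (dom_vface ik oA)
    (xi_obj_xmap (@vmap_inj _ _ i) (@vmap_le _ _ i) oB) (xi_le_xmap _ le)) /=.
  by rewrite !pre_xmap //; exact: vmap_inj.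
Qed.

Lemma E2R_S p : extension_property M -> kan_fib (@mmap M p).
Proof.
move=> EP n k y z Hy [Hz Hzc] Hc Hyz.
pose Img := @ImgS p n k.
pose E := fun c : 'I_n.+2 + 'I_p.+2 => match c with
  | inl i => precomp (pre (@vmap p.+1 n i)) (y i)
  | inr l => precomp (pre (@hmap p n.+1 l)) (z l) end.
have HE : forall c, is_rfun (Dom (@grid_le p.+1 n.+1) Img c) (@xi_le _)
                 (xi_we (@grid_le p.+1 n.+1) (@we_ch p.+1 n.+1)) (E c).
  case=> [i|l].
    by apply: HE_v; apply: Hy.
  exact: (@HE_h M p n.+1 l (z l) (Hz l)).
have Hyz' : forall i l, i != k -> eqNX (dv i (z l)) (dh l (y i)).
  by move=> i l ik; exact: (Hyz i ik l).
have Hc1 : forall c d s, Dom (@grid_le p.+1 n.+1) Img c s ->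
    Dom (@grid_le p.+1 n.+1) Img d s -> fo (E c) s = fo (E d) s.
  case=> [i|l] [j|l'] s Dc Dd /=.
  - exact: ((Hc_vv Hc i j).1 s Dc Dd).
  - by symmetry; exact: ((Hc_hv (Hyz' i l')).1 s Dd Dc).
  - exact: ((Hc_hv (Hyz' j l)).1 s Dc Dd).
  - exact: ((Hc_hh Hzc l l').1 s Dc Dd).
have Hc2 : forall c d B A, Dom (@grid_le p.+1 n.+1) Img c B ->
    Dom (@grid_le p.+1 n.+1) Img c A -> Dom (@grid_le p.+1 n.+1) Img d B ->
    Dom (@grid_le p.+1 n.+1) Img d A -> xi_le B A -> fa (E c) B A = fa (E d) B A.
  case=> [i|l] [j|l'] B A D1 D2 D3 D4 le /=.
  - exact: ((Hc_vv Hc i j).2 B A D1 D2 D3 D4 le).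
  - by symmetry; exact: ((Hc_hv (Hyz' i l')).2 B A D3 D4 D1 D2 le).
  - exact: ((Hc_hv (Hyz' j l)).2 B A D1 D2 D3 D4 le).
  - exact: ((Hc_hh Hzc l l').2 B A D1 D2 D3 D4 le).
have HF := glue_rfun (inl k) HE Hc1 Hc2.
have HF' : is_rfun (SN k) (@xi_le _) (xi_we (@grid_le p.+1 n.+1) (@we_ch p.+1 n.+1))
             (glue (inl k) Img E).
  by apply: (rfun_sub HF) => s; rewrite SNS_Sg.
have [x [Hx Ag]] := extN EP HF'.
exists x; split => //; split.
  move=> i ik.
  change (agree (xi_obj (@grid_le p.+1 n)) (@xi_le _) (precomp (xmap (@vmap p.+1 n i)) x) (y i)).
  apply: (@face_from_glue M _ _ (@grid_le p.+1 n) (@grid_le p.+1 n.+1) (@vmap p.+1 n i) (SN k) x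
     (glue (inl k) Img E) (y i) Ag).
  - by move=> t o; apply: SN_vface.
  - move=> t o; rewrite (glue_fo (inl k) Hc1 (i := inl i) (dom_vface ik o)) /= pre_xmap //.
    exact: vmap_inj.
  - move=> tB tA oB oA le.
    rewrite (glue_fa (inl k) Hc2 (i := inl i) (dom_vface ik oA)
      (xi_obj_xmap (@vmap_inj _ _ i) (@vmap_le _ _ i) oB) (xi_le_xmap _ le)) /=.
    by rewrite !pre_xmap //; exact: vmap_inj.
move=> l.
change (agree (xi_obj (@grid_le p n.+1)) (@xi_le _) (precomp (xmap (@hmap p n.+1 l)) x) (z l)).
apply: (@face_from_glue M _ _ (@grid_le p n.+1) (@grid_le p.+1 n.+1) (@hmap p n.+1 l) (SN k) x
   (glue (inl k) Img E) (z l) Ag).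
- by move=> t o; apply: SN_hface.
- move=> t o; rewrite (glue_fo (inl k) Hc1 (i := inr l) (dom_hface l o)) /= pre_xmap //.
  exact: hmap_inj.
- move=> tB tA oB oA le.
  rewrite (glue_fa (inl k) Hc2 (i := inr l) (dom_hface l oA)
    (xi_obj_xmap (@hmap_inj _ _ l) (@hmap_le _ _ l) oB) (xi_le_xmap _ le)) /=.
  by rewrite !pre_xmap //; exact: hmap_inj.
Qed.

Lemma E2R : extension_property M -> reedy_fibrant M.
Proof. by move=> EP; split; [exact: E2R_0 | move=> p; exact: E2R_S]. Qed.
End Final.

Theorem lemma5p1 (M : RelCat) : reedy_fibrant M <-> extension_property M.
Proof. split; [exact: R2E | exact: E2R]. Qed.
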